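(* Let $k\ge 1$ be an integer and $c$ a real number with $40\le c\le k$. Let $F$ be the distribution on $\{0,1\}$ with $\mathbb{P}(1) = c/k$. Then $BRev(F^k)/SRev(F^k) > 0.56$.
   Context: For i.i.d. values $X_1,\dots,X_k\sim F$ of an additive buyer: $SRev(F^k) = k\cdot\sup_{p\ge0} p\,\mathbb{P}(X_1\ge p)$ is the maximal revenue from selling each item separately at posted prices, and $BRev(F^k) = \sup_{p\ge 0} p\,\mathbb{P}(X_1+\dots+X_k\ge p)$ is the maximal revenue from selling all items as one bundle at a posted price. For the given $F$, $SRev(F^k)=c$. *)

(* Defs.v *)
From mathcomp Require Import all_boot all_order all_algebra.
From mathcomp Require Import all_classical all_reals.
Set Implicit Arguments. Unset Strict Implicit. Unset Printing Implicit Defensive.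
Import Order.TTheory GRing.Theory Num.Theory.
Local Open Scope ring_scope.
Local Open Scope classical_set_scope.

Section Defs.
Variable R : realType.

Definition bern (q : R) (b : bool) : R := if b then q else 1 - q.

Definition bval (b : bool) : R := (b : nat)%:R.

Definition PrX1_ge (q p : R) : R :=
  \sum_(b : bool | p <= bval b) bern q b.

Definition PrSum_ge (k : nat) (q p : R) : R :=
  \sum_(x : {ffun 'I_k -> bool} | p <= \sum_(i < k) bval (x i))
     \prod_(i < k) bern q (x i).

Definition SRev (k : nat) (q : R) : R :=
  k%:R * sup [set p * PrX1_ge q p | p in [set p : R | 0 <= p]].

Definition BRev (k : nat) (q : R) : R :=
  sup [set p * PrSum_ge k q p | p in [set p : R | 0 <= p]].

End Defs.

(* Main.v *)
Require Import Defs.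
From mathcomp Require Import all_boot all_order all_algebra.
From mathcomp Require Import all_classical all_reals.
From mathcomp Require Import sequences exp.
From mathcomp Require Import ring lra.
Import Order.TTheory GRing.Theory Num.Theory.
Local Open Scope ring_scope.
Local Open Scope classical_set_scope.

Section S.
Variable R : realType.
Implicit Types q l p : R.

Definition Sx {k} (x : {ffun 'I_k -> bool}) : R := \sum_(i < k) bval R (x i).
Definition wx {k} q (x : {ffun 'I_k -> bool}) : R := \prod_(i < k) bern q (x i).

Lemma mgf k q l :
  \sum_(x : {ffun 'I_k -> bool}) wx q x * expR (- l * Sx x)
  = (1 - q + q * expR (- l)) ^+ k.
Proof.
have -> : (1 - q + q * expR (- l)) ^+ k =
  \prod_(i < k) \sum_(b : bool) (bern q b * expR (- l * bval R b)).
  rewrite prodr_const card_ord; congr (_ ^+ _).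
  by rewrite big_bool /= /bern /bval /= mulr1 mulr0 expR0 mulr1 addrC.
rewrite (bigA_distr_bigA (fun (i : 'I_k) (b : bool) => bern q b * expR (- l * bval R b))).
apply: eq_bigr => x _.
by rewrite /wx /Sx mulr_sumr expR_sum -big_split.
Qed.

Lemma w_ge0 k q (x : {ffun 'I_k -> bool}) : 0 <= q <= 1 -> 0 <= wx q x.
Proof.
move=> /andP[q0 q1]; apply: prodr_ge0 => i _; rewrite /bern; case: (x i) => //.
by rewrite subr_ge0.
Qed.

Lemma w_sum k q : \sum_(x : {ffun 'I_k -> bool}) wx q x = 1.
Proof.
have := mgf k q 0; rewrite oppr0 expR0 mulr1 subrK expr1n => <-.
by apply: eq_bigr => x _; rewrite mul0r expR0 mulr1.
Qed.

Lemma Sx_le k (x : {ffun 'I_k -> bool}) : Sx x <= k%:R.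
Proof.
rewrite /Sx -[k in k%:R]card_ord -sumr_const; apply: ler_sum => i _.
by rewrite /bval; case: (x i).
Qed.

Lemma Sx_ge0 k (x : {ffun 'I_k -> bool}) : 0 <= Sx x.
Proof. by apply: sumr_ge0 => i _; rewrite /bval; case: (x i). Qed.


Lemma chernoff k q l p : 0 <= q <= 1 -> 0 <= l ->
  \sum_(x : {ffun 'I_k -> bool} | Sx x < p) wx q x
  <= expR (l * p) * (1 - q + q * expR (- l)) ^+ k.
Proof.
move=> hq hl.
apply: (@le_trans _ _ (\sum_(x : {ffun 'I_k -> bool} | Sx x < p)
   (expR (l * p) * (wx q x * expR (- l * Sx x))))).
  apply: ler_sum => x hx.
  rewrite mulrCA -{1}[wx q x]mulr1; apply: ler_wpM2l; first exact: w_ge0.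
  rewrite -expRD.
  rewrite -[1]expR0 ler_expR mulNr -mulrBr mulr_ge0 // subr_ge0 ltW //.
rewrite -mulr_sumr -mgf; apply: ler_wpM2l; first exact: expR_ge0.
rewrite [X in _ <= X](bigID (fun x => Sx x < p)) /= lerDl.
apply: sumr_ge0 => x _; apply: mulr_ge0; [exact: w_ge0 | exact: expR_ge0].
Qed.

Lemma PrSum_split k q p :
  PrSum_ge k q p = 1 - \sum_(x : {ffun 'I_k -> bool} | Sx x < p) wx q x.
Proof.
rewrite -(w_sum k q) (bigID (fun x => Sx x < p)) /= addrC addrK.
by apply: eq_bigl => x; rewrite -leNgt.
Qed.


Lemma SRev_eq k q : 0 <= q <= 1 -> SRev k q = k%:R * q.
Proof.
move=> /andP[q0 q1]; rewrite /SRev; congr (_ * _).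
have PX p : PrX1_ge q p =
    (if p <= 1 then q else 0) + (if p <= 0 then 1 - q else 0).
  by rewrite /PrX1_ge big_mkcond big_bool /= /bval /bern /=.
set E := [set p * PrX1_ge q p | p in [set p : R | 0 <= p]].
have ub : ubound E q.
  move=> _ [p /= p0 <-]; rewrite PX.
  have [p1|p1] := leP p 1; have [p00|p00] := leP p 0.
  - have -> : p = 0 by apply/le_anti; rewrite p00 p0.
    by rewrite mul0r.
  - by rewrite addr0; nra.
  - lra.
  - by rewrite addr0 mulr0.
have mem : E q by exists 1; rewrite /= ?ler01 // PX lexx ler10 addr0 mul1r.
apply/le_anti/andP; split.
  by apply: ge_sup => //; exists q.
by apply: ub_le_sup => //; exists q.
Qed.

Lemma PrSum_ge0 k q p : 0 <= q <= 1 -> 0 <= PrSum_ge k q p.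
Proof. by move=> hq; apply: sumr_ge0 => x _; apply: w_ge0. Qed.

Lemma PrSum_le1 k q p : 0 <= q <= 1 -> PrSum_ge k q p <= 1.
Proof.
move=> hq; rewrite PrSum_split lerBlDr lerDl.
by apply: sumr_ge0 => x _; apply: w_ge0.
Qed.

Lemma BRev_ge k q p : 0 <= q <= 1 -> 0 <= p ->
  p * PrSum_ge k q p <= BRev k q.
Proof.
move=> hq p0; rewrite /BRev; apply: ub_le_sup; last by exists p.
exists k%:R => _ [p' /= p'0 <-].
have [pk|pk] := leP p' k%:R.
  have h1 := PrSum_le1 k q p' hq; have h2 := PrSum_ge0 k q p' hq.
  by rewrite -[X in _ <= X]mulr1; apply: ler_pM.
rewrite /PrSum_ge big1 ?mulr0 // => x hx.
have := le_trans hx (Sx_le _ x); rewrite leNgt pk //.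
Qed.

Lemma pow10 (x : R) : x^+10 = ((x^+2)^+2)^+2 * x^+2.
Proof. by rewrite -!exprM -exprD. Qed.
Lemma lbsq (x a : R) : 0 <= a -> a <= x -> a * a <= x^+2.
Proof. by move=> a0 ax; rewrite expr2; apply: ler_pM. Qed.

Lemma lbsq' (x a b : R) : 0 <= a -> a <= x -> b <= a * a -> b <= x^+2.
Proof. by move=> a0 ax ba; apply: (le_trans ba); apply: lbsq. Qed.

Lemma expR_half : (50/31 : R) <= expR (1/2).
Proof.
have -> : (1/2 : R) = 1/20 * 10%:R by lra.
rewrite expRM_natr.
have h1 : (21/20 : R) <= expR (1/20) by have := expR_ge1Dx (1/20 : R); lra.
have h2 : (21/20 : R)^+10 <= expR (1/20) ^+ 10.
  by have := @lerXn2r R 10 (21/20) (expR (1/20)); apply; rewrite ?nnegrE ?expR_ge0 //; lra.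
apply: le_trans h2; rewrite pow10.
have y1 : (21/20 : R)^+2 = 441/400 by rewrite expr2; lra.
rewrite y1.
have y2 : (12155/10000 : R) <= (441/400)^+2 by rewrite expr2; lra.
have y3 : (14774/10000 : R) <= ((441/400)^+2)^+2 by apply: (@lbsq' _ (12155/10000)) => //; lra.
lra.
Qed.

Lemma expR_22 : (73/10 : R) <= expR (11/5).
Proof.
have -> : (11/5 : R) = 11/50 * 10%:R by lra.
rewrite expRM_natr.
have h1 : (61/50 : R) <= expR (11/50) by have := expR_ge1Dx (11/50 : R); lra.
have h2 : (61/50 : R)^+10 <= expR (11/50) ^+ 10.
  by have := @lerXn2r R 10 (61/50) (expR (11/50)); apply; rewrite ?nnegrE ?expR_ge0 //; lra.
apply: le_trans h2; rewrite pow10.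
have y1 : (61/50 : R)^+2 = 3721/2500 by rewrite expr2; lra.
rewrite y1.
have y2 : (443/200 : R) <= (3721/2500)^+2 by rewrite expr2; lra.
have y3 : (2453/500 : R) <= ((3721/2500)^+2)^+2.
  by apply: (@lbsq' _ (443/200)) => //; lra.
lra.
Qed.
End S.

Local Close Scope classical_set_scope.

Theorem lemma1 (R : realType) (k : nat) (c : R) :
  (1 <= k)%N -> 40 <= c -> c <= k%:R ->
  BRev k (c / k%:R) / SRev k (c / k%:R) > 56 / 100.
Proof.
move=> k1 c40 ck.
have k0 : (0 : R) < k%:R by rewrite ltr0n.
have c0 : 0 < c by lra.
set q := c / k%:R.
have hq : 0 <= q <= 1.
  apply/andP; split; first by rewrite /q divr_ge0 // ltW.
  by rewrite /q ler_pdivrMr // mul1r.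
have kq : k%:R * q = c by rewrite /q mulrC divfK // gt_eqF.
rewrite SRev_eq // kq ltr_pdivlMr //.
set e := expR (- (1/2) : R).
have he0 : 0 < e := expR_gt0 _.
have he : e <= 62/100.
  have := expR_half R; have := expRxMexpNx_1 (1/2 : R); rewrite -/e.
  move=> H1 H2; nra.
have hE : 0 < expR (11/5 : R) := expR_gt0 _.
have h22 : expR (- (11/5) : R) <= 10/73.
  have := expR_22 R; have := expRxMexpNx_1 (11/5 : R).
  have := expR_gt0 (- (11/5) : R); move=> H0 H1 H2; nra.
set p := 13/20 * c.
have p0 : 0 <= p by rewrite /p; lra.
have hl : (0:R) <= 1/2 by lra.
have hch := chernoff R k q (1/2) p hq hl.
rewrite -/e in hch.
have /andP[q0 q1] := hq.
have hpow : (1 - q + q * e)^+k <= expR (- (q * (1 - e)))^+k.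
  have := @lerXn2r R k (1 - q + q * e) (expR (- (q * (1 - e)))); apply;
    rewrite ?nnegrE ?expR_ge0 //; first nra.
  have := expR_ge1Dx (- (q * (1 - e))); lra.
rewrite -expRM_natr in hpow.
have E1 : - (q * (1 - e)) * k%:R = - (c * (1 - e)) by rewrite -kq; ring.
rewrite E1 in hpow.
have hS : \sum_(x : {ffun 'I_k -> bool} | Sx R x < p) wx R q x <= 10/73.
  apply: (le_trans hch); apply: (le_trans (ler_wpM2l (expR_ge0 _) hpow)).
  rewrite -expRD; apply: le_trans h22; rewrite ler_expR /p; nra.
have hb := BRev_ge R k q p hq p0.
rewrite PrSum_split in hb.
have : p * (63/73) <= p * (1 - \sum_(x : {ffun 'I_k -> bool} | Sx R x < p) wx R q x).
  by apply: ler_wpM2l => //; lra.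
rewrite /p in hb *; lra.
Qed.
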